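(* Assume the standing setup with $Z=\mathbb{Z}/p$, $p$ prime. Let $G$ be a profinite group and $N_1\le N_2$ closed normal subgroups of $G$ contained in $\bar T(G)$, with projections $\pi_i\colon G\to G/N_i$. The following are equivalent: (a) $\inf\colon H^2(G/N_2)_{\pi_2}\to H^2(G/N_1)_{\pi_1}$ is an isomorphism; (b) $\inf\colon H^2(G/N_2)_{\pi_2}\to H^2(G/N_1)_{\pi_1}$ is injective; (c) $N_1T(G)=N_2T(G)$.
   Context: Standing setup: all homomorphisms of profinite groups are continuous. For profinite groups $\mathbb{U}$ and $G$, $T^{\mathbb{U}}(G)$ denotes the intersection of the kernels of all continuous homomorphisms $G\to\mathbb{U}$. Fix a finite abelian group $Z$ and a nonempty set $\Omega$ of central extensions of profinite groups $\omega\colon 0\to Z\to\mathbb{U}_\omega\xrightarrow{\lambda_\omega}\bar{\mathbb{U}}_\omega\to1$ such that for every $\omega$: (I) there are finitely many continuous homomorphisms $\gamma_1,\dots,\gamma_n\colon\bar{\mathbb{U}}_\omega\to\mathbb{U}_\omega$ with $\bigcap_i\operatorname{Ker}(\gamma_i)=\{1\}$; (II) $Z$ embeds as a closed subgroup of $\bar{\mathbb{U}}_\omega$. For a profinite group $G$ set $T(G)=\bigcap_{\omega\in\Omega}T^{\mathbb{U}_\omega}(G)$ and $\bar T(G)=\bigcap_{\omega\in\Omega}T^{\bar{\mathbb{U}}_\omega}(G)$. Here $H^i(G)=H^i(G,\mathbb{Z}/p)$ with trivial action. $\alpha_\omega\in H^2(\bar{\mathbb{U}}_\omega)$ is the class of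 $\omega$, and $\bar\rho^*(\alpha_\omega)$ its pullback along $\bar\rho$. For $N\trianglelefteq G$ closed with projection $\pi\colon G\to G/N$, a continuous $\bar\rho\colon G/N\to\bar{\mathbb{U}}_\omega$ is $\pi$-liftable if there is a continuous $\rho\colon G\to\mathbb{U}_\omega$ with $\lambda_\omega\circ\rho=\bar\rho\circ\pi$, and $H^2(G/N)_\pi$ is the subgroup of $H^2(G/N)$ generated by all $\bar\rho^*(\alpha_\omega)$ with $\omega\in\Omega$ and $\bar\rho$ $\pi$-liftable. *)

(* Defs.v *)
From HB Require Import structures.
From mathcomp Require Import all_boot all_order all_algebra.
From mathcomp Require Import boolp classical_sets topology.
Set Implicit Arguments. Unset Strict Implicit. Unset Printing Implicit Defensive.
Import GRing.Theory.
Local Open Scope classical_set_scope.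

Record profGroup := ProfGroup {
  pg_car :> topologicalType;
  pg_mul : pg_car -> pg_car -> pg_car;
  pg_inv : pg_car -> pg_car;
  pg_one : pg_car;
  pg_mulA : forall x y z, pg_mul x (pg_mul y z) = pg_mul (pg_mul x y) z;
  pg_mul1 : forall x, pg_mul pg_one x = x;
  pg_mulV : forall x, pg_mul (pg_inv x) x = pg_one;
  pg_mul_cont : continuous (fun xy : pg_car * pg_car => pg_mul xy.1 xy.2);
  pg_inv_cont : continuous pg_inv;
  pg_compact : compact [set: pg_car];
  pg_hausdorff : hausdorff_space pg_car;
  pg_totdisc : totally_disconnected [set: pg_car]
}.

Definition conthom (G H : profGroup) (f : G -> H) : Prop :=
  continuous f /\ forall x y, f (pg_mul x y) = pg_mul (f x) (f y).

Definition closed_normal (G : profGroup) (N : set G) : Prop :=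
  [/\ closed N, N (pg_one G),
      (forall x y, N x -> N y -> N (pg_mul x (pg_inv y))) &
      (forall x g, N x -> N (pg_mul (pg_inv g) (pg_mul x g)))].

Definition TU (U G : profGroup) : set G :=
  [set x | forall f : G -> U, conthom f -> f x = pg_one U].

Definition setmul (G : profGroup) (A B : set G) : set G :=
  [set z | exists2 a, A a & exists2 b, B b & z = pg_mul a b].

Record cext (p : nat) := CExt {
  ce_U : profGroup;
  ce_Ub : profGroup;
  ce_iota : 'Z_p -> ce_U;
  ce_lam : ce_U -> ce_Ub;
  ce_iota_hom : forall a b, ce_iota (a + b)%R = pg_mul (ce_iota a) (ce_iota b);
  ce_iota_inj : injective ce_iota;
  ce_iota_closed : closed (range ce_iota);
  ce_iota_central : forall a u, pg_mul (ce_iota a) u = pg_mul u (ce_iota a);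
  ce_lam_hom : conthom ce_lam;
  ce_lam_surj : forall y, exists x, ce_lam x = y;
  ce_exact : forall u, ce_lam u = pg_one ce_Ub <-> exists a, ce_iota a = u
}.

Definition condI p (w : cext p) : Prop :=
  exists (n : nat) (g : 'I_n -> ce_Ub w -> ce_U w),
    (forall i, conthom (g i)) /\
    (forall x, (forall i, g i x = pg_one (ce_U w)) -> x = pg_one (ce_Ub w)).

Definition condII p (w : cext p) : Prop :=
  exists j : 'Z_p -> ce_Ub w,
    [/\ injective j, closed (range j) &
        forall a b, j (a + b)%R = pg_mul (j a) (j b)].

(* Cochains of G/N are modelled as N-invariant continuous cochains on G
   (continuity into the discrete group Z/p = open fibres). *)
Definition cochain1 p (G : profGroup) (N : set G) (g : G -> 'Z_p) : Prop :=
  (forall z, open (g @^-1` [set z])) /\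
  (forall x n, N n -> g (pg_mul x n) = g x).

Definition cochain2 p (G : profGroup) (N : set G) (f : G -> G -> 'Z_p) : Prop :=
  (forall z, open ((fun xy : G * G => f xy.1 xy.2) @^-1` [set z])) /\
  (forall x y n m, N n -> N m -> f (pg_mul x n) (pg_mul y m) = f x y).

Definition cocycle2 p (G : profGroup) (N : set G) (f : G -> G -> 'Z_p) : Prop :=
  cochain2 N f /\
  forall x y z, (f y z - f (pg_mul x y) z + f x (pg_mul y z) - f x y = 0)%R.

Definition cohom p (G : profGroup) (N : set G) (f1 f2 : G -> G -> 'Z_p) : Prop :=
  exists g : G -> 'Z_p, cochain1 N g /\
    forall x y, (f1 x y - f2 x y = g y - g (pg_mul x y) + g x)%R.

(* c is a cocycle representing the class alpha_w of the extension w,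
   computed from the continuous set-theoretic section s of lambda_w *)
Definition ext_cocycle p (w : cext p) (c : ce_Ub w -> ce_Ub w -> 'Z_p) : Prop :=
  exists s : ce_Ub w -> ce_U w,
    [/\ continuous s, (forall a, ce_lam (s a) = a) &
        forall a b, ce_iota w (c a b) =
          pg_mul (pg_mul (s a) (s b)) (pg_inv (s (pg_mul a b)))].

(* rb : G -> Ubar trivial on N is (via pi) a continuous homomorphism
   G/N -> Ubar; it is pi-liftable if some continuous rho : G -> U
   satisfies lambda o rho = rb o pi *)
Definition liftable p (G : profGroup) (N : set G) (w : cext p)
    (rb : G -> ce_Ub w) : Prop :=
  [/\ conthom rb, (forall n, N n -> rb n = pg_one (ce_Ub w)) &
      exists rho : G -> ce_U w, conthom rho /\ forall x, ce_lam (rho x) = rb x].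

(* f (a 2-cocycle of G/N) lies in H^2(G/N)_pi: its class is in the subgroup
   generated by the pullbacks rb^*(alpha_w), w in Omega, rb pi-liftable *)
Definition in_H2pi p (I : Type) (Om : I -> cext p) (G : profGroup) (N : set G)
    (f : G -> G -> 'Z_p) : Prop :=
  cocycle2 N f /\
  exists (n : nat) (w : 'I_n -> I)
         (rb : forall i, G -> ce_Ub (Om (w i)))
         (c : forall i, ce_Ub (Om (w i)) -> ce_Ub (Om (w i)) -> 'Z_p)
         (k : 'I_n -> int),
    (forall i, liftable N (rb i)) /\ (forall i, ext_cocycle (c i)) /\
    cohom N f (fun x y => \sum_(i < n) (c i (rb i x) (rb i y)) *~ k i)%R.

Definition T_Om p (I : Type) (Om : I -> cext p) (G : profGroup) : set G :=
  [set x | forall i, @TU (ce_U (Om i)) G x].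
Definition Tbar_Om p (I : Type) (Om : I -> cext p) (G : profGroup) : set G :=
  [set x | forall i, @TU (ce_Ub (Om i)) G x].
Arguments T_Om {p I} Om G _.
Arguments Tbar_Om {p I} Om G _.

(* Main.v *)
Require Import Defs.
From mathcomp Require Import all_boot all_order all_algebra.
From mathcomp Require Import boolp classical_sets topology.
From HB Require Import structures.
From mathcomp Require Import finmap.
From mathcomp Require Import ring.

Section PartA.
Set Implicit Arguments. Unset Strict Implicit. Unset Printing Implicit Defensive.
Import GRing.Theory.
Local Open Scope classical_set_scope.

Section Grp.
Variable G : profGroup.
Local Notation "x \* y" := (pg_mul x y) (at level 40, left associativity).
Local Notation one := (pg_one G).
Local Notation inv := (@pg_inv G).

Lemma pg_mulVr (x : G) : x \* inv x = one.
Proof.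
rewrite -[x \* inv x]pg_mul1 -[in X in X \* _](pg_mulV (inv x)).
by rewrite -pg_mulA [inv x \* _]pg_mulA pg_mulV pg_mul1 pg_mulV.
Qed.

Lemma pg_mulr1 (x : G) : x \* one = x.
Proof. by rewrite -(pg_mulV x) pg_mulA pg_mulVr pg_mul1. Qed.

Lemma pg_mulK (x y : G) : inv x \* (x \* y) = y.
Proof. by rewrite pg_mulA pg_mulV pg_mul1. Qed.

Lemma pg_mulKV (x y : G) : x \* (inv x \* y) = y.
Proof. by rewrite pg_mulA pg_mulVr pg_mul1. Qed.

Lemma pg_mulrK (x y : G) : (y \* x) \* inv x = y.
Proof. by rewrite -pg_mulA pg_mulVr pg_mulr1. Qed.

Lemma pg_mulrKV (x y : G) : (y \* inv x) \* x = y.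
Proof. by rewrite -pg_mulA pg_mulV pg_mulr1. Qed.

Lemma pg_mulI (x y z : G) : x \* y = x \* z -> y = z.
Proof. by move=> h; rewrite -(pg_mulK x y) h pg_mulK. Qed.

Lemma pg_mulIr (x y z : G) : y \* x = z \* x -> y = z.
Proof. by move=> h; rewrite -(pg_mulrK x y) h pg_mulrK. Qed.

Lemma pg_idem (x : G) : x \* x = x -> x = one.
Proof. by move=> h; apply: (@pg_mulI x); rewrite h pg_mulr1. Qed.

Lemma pg_invK (x : G) : inv (inv x) = x.
Proof. by apply: (@pg_mulIr (inv x)); rewrite pg_mulV pg_mulVr. Qed.

Lemma pg_invM (x y : G) : inv (x \* y) = inv y \* inv x.
Proof.
apply: (@pg_mulIr (x \* y)); rewrite pg_mulV.
by rewrite -pg_mulA (pg_mulA (inv x)) pg_mulV pg_mul1 pg_mulV.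
Qed.

Lemma pg_inv1 : inv one = one.
Proof. by rewrite -{2}(pg_mulV one) pg_mulr1. Qed.

Lemma pg_mul_cont2 (T : topologicalType) (f g : T -> G) :
  continuous f -> continuous g -> continuous (fun t => f t \* g t).
Proof.
move=> cf cg t.
apply: (@continuous_comp _ _ _ (fun t => (f t, g t)) (fun xy : G * G => xy.1 \* xy.2)).
  by apply: cvg_pair; [exact: cf | exact: cg].
exact: pg_mul_cont.
Qed.

End Grp.

Section Central.
Variable G : profGroup.
Local Notation "x \* y" := (pg_mul x y) (at level 40, left associativity).
Lemma central_cancel (P Q A B Z : G) :
  (forall u, P \* u = u \* P) -> (forall u, Q \* u = u \* Q) ->
  P \* A \* (Q \* B) \* Z \* pg_inv P \* pg_inv Q = A \* B \* Z.
Proof.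
move=> cP cQ.
have -> : P \* A \* (Q \* B) \* Z = P \* (A \* (Q \* B) \* Z) by rewrite !pg_mulA.
rewrite cP pg_mulrK.
have -> : A \* (Q \* B) \* Z = Q \* (A \* B \* Z).
  by rewrite (pg_mulA A Q B) -(cQ A) !pg_mulA.
by rewrite cQ pg_mulrK.
Qed.
End Central.

End PartA.

Section PartB.
Set Implicit Arguments. Unset Strict Implicit. Unset Printing Implicit Defensive.
Import GRing.Theory.
Local Open Scope classical_set_scope.

Section LC.
Variable p : nat.
Definition lc (T : topologicalType) (h : T -> 'Z_p) := forall z, open (h @^-1` [set z]).

Lemma lcP (T : topologicalType) (h : T -> 'Z_p) :
  lc h <-> forall x, \forall y \near x, h y = h x.
Proof.
split.
  move=> hh x; have := hh (h x); rewrite openE => /(_ x erefl).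
  by apply: filterS => y.
move=> hh z; rewrite openE => x /= hx; rewrite /interior.
by apply: filterS (hh x) => y /= ->.
Qed.

Lemma lc_comp (S T : topologicalType) (F : S -> T) (h : T -> 'Z_p) :
  continuous F -> lc h -> lc (h \o F).
Proof.
move=> cF /lcP hh; apply/lcP => x.
exact: (cF x _ (hh (F x))).
Qed.

Lemma lc_cst (T : topologicalType) (a : 'Z_p) : lc (fun _ : T => a).
Proof. by apply/lcP => x; near=> y. Unshelve. all: by end_near. Qed.

Lemma lcD (T : topologicalType) (h1 h2 : T -> 'Z_p) :
  lc h1 -> lc h2 -> lc (fun x => h1 x + h2 x)%R.
Proof.
move=> /lcP a /lcP b; apply/lcP => x.
by apply: filterS (filterI (a x) (b x)) => y [-> ->].
Qed.

Lemma lcN (T : topologicalType) (h1 : T -> 'Z_p) :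
  lc h1 -> lc (fun x => - h1 x)%R.
Proof.
move=> /lcP a; apply/lcP => x.
by apply: filterS (a x) => y ->.
Qed.

Lemma lcB (T : topologicalType) (h1 h2 : T -> 'Z_p) :
  lc h1 -> lc h2 -> lc (fun x => h1 x - h2 x)%R.
Proof. by move=> a b; apply: lcD => //; apply: lcN. Qed.

Lemma lcMz (T : topologicalType) (h1 : T -> 'Z_p) k :
  lc h1 -> lc (fun x => h1 x *~ k)%R.
Proof.
move=> /lcP a; apply/lcP => x.
by apply: filterS (a x) => y ->.
Qed.

Lemma lc_sum (T : topologicalType) n (h : 'I_n -> T -> 'Z_p) :
  (forall i, lc (h i)) -> lc (fun x => \sum_(i < n) h i x)%R.
Proof.
move=> hh; apply/lcP => x.
have H : \forall y \near x, forall i, h i y = h i x.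
  by apply: filter_forall => i; exact: (proj1 (lcP _) (hh i) x).
by apply: filterS H => y hy; apply: eq_bigr => i _; rewrite hy.
Qed.

Lemma lc_ext (T : topologicalType) (h1 h2 : T -> 'Z_p) :
  (forall x, h1 x = h2 x) -> lc h1 -> lc h2.
Proof. by move=> e; have -> : h1 = h2 by apply: funext. Qed.

End LC.

Section Hom.
Local Notation "x \* y" := (pg_mul x y) (at level 40, left associativity).

Lemma conthom1 (G H : profGroup) (f : G -> H) : conthom f -> f (pg_one G) = pg_one H.
Proof.
case=> _ fm; apply: pg_idem; by rewrite -fm pg_mul1.
Qed.

Lemma conthomV (G H : profGroup) (f : G -> H) x : conthom f -> f (pg_inv x) = pg_inv (f x).
Proof.
move=> hf; apply: (@pg_mulIr _ (f x)); rewrite pg_mulV -hf.2 pg_mulV.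
exact: conthom1.
Qed.

Lemma conthom_comp (G H K : profGroup) (f : G -> H) (g : H -> K) :
  conthom f -> conthom g -> conthom (g \o f).
Proof.
move=> [cf mf] [cg mg]; split; first by move=> x; apply: continuous_comp; [exact: cf|exact: cg].
by move=> x y /=; rewrite mf mg.
Qed.

Lemma conthom_one (G H : profGroup) : conthom (fun _ : G => pg_one H).
Proof. by split; [move=> x; apply: cvg_cst | move=> x y; rewrite pg_mul1]. Qed.

End Hom.

Section Kap.
Variable p : nat.
Variable w : cext p.
Local Notation "x \* y" := (pg_mul x y) (at level 40, left associativity).
Local Notation U := (ce_U w).
Local Notation Ub := (ce_Ub w).
Local Notation io := (ce_iota w).
Local Notation lam := (@ce_lam _ w).

Definition kap (u : U) : 'Z_p := odflt 0%R [pick a | io a == u].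

Lemma kapE a : kap (io a) = a.
Proof.
rewrite /kap; case: pickP => [b /eqP /ce_iota_inj -> //|].
by move=> /(_ a); rewrite eqxx.
Qed.

Lemma io0 : io 0%R = pg_one U.
Proof. by apply: pg_idem; rewrite -ce_iota_hom addr0. Qed.

Lemma ioN a : io (- a)%R = pg_inv (io a).
Proof. by apply: (@pg_mulIr _ (io a)); rewrite -ce_iota_hom addNr pg_mulV io0. Qed.

Lemma lam1 : lam (pg_one U) = pg_one Ub.
Proof. exact: conthom1 (@ce_lam_hom _ w). Qed.

Lemma lam_io a : lam (io a) = pg_one Ub.
Proof. by apply/(@ce_exact _ w); exists a. Qed.

Lemma kapK u : lam u = pg_one Ub -> io (kap u) = u.
Proof. by move=> /(@ce_exact _ w) [a <-]; rewrite kapE. Qed.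

Lemma io_inj a b : io a = io b -> a = b.
Proof. exact: ce_iota_inj. Qed.

Lemma lc_kap (T : topologicalType) (F : T -> U) :
  continuous F -> (forall t, lam (F t) = pg_one Ub) -> lc (kap \o F).
Proof.
move=> cF hF; apply/lcP => x.
have [a ea] : exists a, io a = F x by apply/(@ce_exact _ w).
have hs : \forall u \near F x, forall b : 'Z_p, b != a -> u != io b.
  apply: filter_forall => b; have [->|nab] := eqVneq b a.
    by apply: filterE => u /negP; case.
  have hne : F x != io b by rewrite -ea; apply/eqP => /io_inj /eqP; rewrite eq_sym (negbTE nab).
  have cl : closed [set io b] by apply: accessible_closed_set1; apply: hausdorff_accessible; exact: pg_hausdorff.
  have : nbhs (F x) (~` [set io b]).
    by apply: open_nbhs_nbhs; split; [exact: closed_openC | move=> /= e; move/eqP: hne].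
  by apply: filterS => u /= hu _; apply/eqP.
have hs2 : \forall y \near x, forall b, b != a -> F y != io b := cF x _ hs.
apply: filterS hs2 => y /= hy.
rewrite -ea kapE.
have [b eb] : exists b, io b = F y by apply/(@ce_exact _ w).
rewrite -eb kapE; apply/eqP; apply: contraT => nab.
by have := hy b nab; rewrite eb eqxx.
Qed.
End Kap.

End PartB.

Section PartC.
Set Implicit Arguments. Unset Strict Implicit. Unset Printing Implicit Defensive.
Import GRing.Theory.
Local Open Scope classical_set_scope.

Section HH.
Variable p : nat.
Variable w : cext p.
Local Notation "x \* y" := (pg_mul x y) (at level 40, left associativity).
Local Notation U := (ce_U w).
Local Notation Ub := (ce_Ub w).
Local Notation io := (@ce_iota _ w).
Local Notation lam := (@ce_lam _ w).
Variable s : Ub -> U.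
Hypothesis cs : continuous s.
Hypothesis ls : forall a, lam (s a) = a.
Variable G : profGroup.
Variable rho : G -> U.
Hypothesis hrho : conthom rho.

Let lamh := @ce_lam_hom _ w.

Definition hh (x : G) : 'Z_p := kap (rho x \* pg_inv (s (lam (rho x)))).

Lemma hh_lam x : lam (rho x \* pg_inv (s (lam (rho x)))) = pg_one Ub.
Proof. by rewrite lamh.2 (conthomV _ lamh) ls pg_mulVr. Qed.

Lemma hh_io x : io (hh x) = rho x \* pg_inv (s (lam (rho x))).
Proof. by rewrite /hh kapK // hh_lam. Qed.

Lemma central (a : 'Z_p) (u : U) : io a \* u = u \* io a.
Proof. exact: ce_iota_central. Qed.

Lemma hh_lc : lc hh.
Proof.
apply: lc_kap; last exact: hh_lam.
apply: pg_mul_cont2; first exact: hrho.1.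
move=> x; apply: continuous_comp; last exact: pg_inv_cont.
apply: continuous_comp; last exact: cs.
apply: continuous_comp; first exact: hrho.1.
exact: lamh.1.
Qed.

Lemma hh_shift x n : lam (rho n) = pg_one Ub ->
  hh (pg_mul x n) = (hh x + kap (rho n))%R.
Proof.
move=> hn; apply: (@io_inj _ w); rewrite ce_iota_hom hh_io hh_io kapK //.
rewrite hrho.2 lamh.2 hn pg_mulr1.
by rewrite -pg_mulA -(kapK hn) central pg_mulA.
Qed.

Variable c : Ub -> Ub -> 'Z_p.
Hypothesis hc : forall a b, io (c a b) = s a \* s b \* pg_inv (s (a \* b)).

Lemma c_hh x y : c (lam (rho x)) (lam (rho y)) = (hh (pg_mul x y) - hh x - hh y)%R.
Proof.
apply: (@io_inj _ w); rewrite !ce_iota_hom !ioN hc !hh_io hrho.2 lamh.2.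
set A := s (lam (rho x)); set B := s (lam (rho y)); set C := s (lam (rho x) \* lam (rho y)).
have eP : rho x \* pg_inv A = io (hh x) by rewrite hh_io.
have eQ : rho y \* pg_inv B = io (hh y) by rewrite hh_io.
have ex : rho x = io (hh x) \* A by rewrite -eP pg_mulrKV.
have ey : rho y = io (hh y) \* B by rewrite -eQ pg_mulrKV.
rewrite eP eQ ex ey central_cancel //; exact: central.
Qed.
End HH.

End PartC.

Section PartD.
Set Implicit Arguments. Unset Strict Implicit. Unset Printing Implicit Defensive.
Import GRing.Theory.
Local Open Scope classical_set_scope.
Local Open Scope ring_scope.

Lemma repr_H2 p (I : Type) (Om : I -> cext p) (G : profGroup) (N : set G)
  (f : G -> G -> 'Z_p) : in_H2pi Om N f ->
  exists H : G -> 'Z_p, exists psi : G -> 'Z_p,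
   [/\ lc H, (forall x y, f x y = H y - H (pg_mul x y) + H x)%R,
       (forall x n, N n -> H (pg_mul x n) = H x - psi n)%R &
       (forall t, N t -> T_Om Om G t -> psi t = 0%R)].
Proof.
move=> [[[fc fN] fco] [n [w [rb [c [k [hl [hc hcoh]]]]]]]].
have hrho : forall i, {rho : G -> ce_U (Om (w i)) | conthom rho /\ forall x, ce_lam (rho x) = rb i x}.
  by move=> i; apply: cid; case: (hl i).
have hs : forall i, {s : ce_Ub (Om (w i)) -> ce_U (Om (w i)) |
   [/\ continuous s, (forall a, ce_lam (s a) = a) &
        forall a b, ce_iota _ (c i a b) =
          pg_mul (pg_mul (s a) (s b)) (pg_inv (s (pg_mul a b)))]}.
  by move=> i; apply: cid; exact: (hc i).
pose rho i := proj1_sig (hrho i).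
pose s i := proj1_sig (hs i).
pose h i := hh (s i) (rho i).
pose Hc x := (\sum_(i < n) h i x *~ k i)%R.
have eF : forall x y, (\sum_(i < n) c i (rb i x) (rb i y) *~ k i = Hc (pg_mul x y) - Hc x - Hc y)%R.
  move=> x y; rewrite /Hc -!sumrB; apply: eq_bigr => i _.
  rewrite -!mulrzBl; congr (_ *~ _).
  have [hr1 hr2] := proj2_sig (hrho i).
  have [s1 s2 s3] := proj2_sig (hs i).
  rewrite -!hr2; exact: (c_hh s2 hr1 s3).
case: hcoh => g [[gc gN] hg].
exists (fun x => g x - Hc x)%R.
exists (fun m => \sum_(i < n) kap (rho i m) *~ k i)%R.
split.
- apply: lcB => //; apply: lc_sum => i; apply: lcMz.
  have [hr1 hr2] := proj2_sig (hrho i).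
  have [s1 s2 s3] := proj2_sig (hs i).
  exact: hh_lc.
- move=> x y; have := hg x y; rewrite eF => e.
  have -> : f x y = (f x y - (Hc (pg_mul x y) - Hc x - Hc y)) + (Hc (pg_mul x y) - Hc x - Hc y) by rewrite subrK.
  rewrite e; ring.
- move=> x m Nm; rewrite gN //.
  have -> : Hc (pg_mul x m) = (Hc x + \sum_(i < n) kap (rho i m) *~ k i)%R.
    rewrite /Hc -big_split; apply: eq_bigr => i _ /=.
    rewrite -mulrzDl; congr (_ *~ _).
    have [hr1 hr2] := proj2_sig (hrho i).
    have [s1 s2 s3] := proj2_sig (hs i).
    apply: hh_shift => //.
    by rewrite hr2; case: (hl i) => _ /(_ m Nm).
  ring.
- move=> t Nt Tt; apply: big1 => i _.
  have [hr1 hr2] := proj2_sig (hrho i).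
  by rewrite /rho (Tt (w i) _ hr1) -io0 kapE mul0rz.
Qed.

End PartD.

Section PartE.
Set Implicit Arguments. Unset Strict Implicit. Unset Printing Implicit Defensive.
Import GRing.Theory.
Local Open Scope classical_set_scope.
Local Open Scope ring_scope.

Lemma chi_kill p (w : cext p) (hw : condII w) (G : profGroup) (chi : G -> 'Z_p) :
  lc chi -> (forall x y, chi (pg_mul x y) = chi x + chi y) ->
  forall t, TU (ce_Ub w) t -> chi t = 0.
Proof.
move=> lcc hom t Tt; case: hw => j [jinj _ jhom].
have j0 : j 0 = pg_one (ce_Ub w) by apply: pg_idem; rewrite -jhom addr0.
apply: jinj; rewrite j0; apply: (Tt (j \o chi)); split.
  apply/continuousP => O oO.
  have -> : (j \o chi) @^-1` O = \bigcup_(z in [set z | O (j z)]) (chi @^-1` [set z]).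
    apply/seteqP; split => x /=; first by move=> Ox; exists (chi x).
    by move=> [z /= Oz ->].
  by apply: bigcup_open => z _; exact: lcc.
by move=> x y /=; rewrite hom jhom.
Qed.

Lemma delta0_hom p (G : profGroup) (chi : G -> 'Z_p) :
  (forall x y, chi y - chi (pg_mul x y) + chi x = 0) ->
  forall x y, chi (pg_mul x y) = chi x + chi y.
Proof.
move=> h x y; apply/eqP; rewrite eq_sym -subr_eq0; apply/eqP.
by rewrite -(h x y); ring.
Qed.

Lemma T_one p (I : Type) (Om : I -> cext p) (G : profGroup) : T_Om Om G (pg_one G).
Proof. by move=> i f hf; exact: conthom1. Qed.

Lemma c_to_b p (I : Type) (i0 : I) (Om : I -> cext p)
    (hII : forall i, condII (Om i))
    (G : profGroup) (N1 N2 : set G)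
    (hN2 : closed_normal N2) (h12 : N1 `<=` N2)
    (hN2T : N2 `<=` Tbar_Om Om G) :
  setmul N1 (T_Om Om G) = setmul N2 (T_Om Om G) ->
  forall f1 f2, in_H2pi Om N2 f1 -> in_H2pi Om N2 f2 ->
               cohom N1 f1 f2 -> cohom N2 f1 f2.
Proof.
move=> eT f1 f2 h1 h2 [g [[gc gN] hg]].
have [H1 [psi1 [lH1 e1 s1 z1]]] := repr_H2 h1.
have [H2 [psi2 [lH2 e2 s2 z2]]] := repr_H2 h2.
pose chi x := H1 x - H2 x - g x.
have chom : forall x y, chi (pg_mul x y) = chi x + chi y.
  apply: delta0_hom => x y; have := hg x y; rewrite e1 e2 /chi => e.
  have E0 : (H1 y - H1 (pg_mul x y) + H1 x - (H2 y - H2 (pg_mul x y) + H2 x)) - (g y - g (pg_mul x y) + g x) = 0.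
    by rewrite e subrr.
  rewrite -[RHS]E0 /chi; ring.
have lchi : lc chi by apply: lcB => //; apply: lcB.
pose th m := psi1 m - psi2 m + chi m.
have gs : forall x m, N2 m -> g (pg_mul x m) = g x - th m.
  move=> x m Nm.
  have -> : g (pg_mul x m) = H1 (pg_mul x m) - H2 (pg_mul x m) - chi (pg_mul x m) by rewrite /chi; ring.
  rewrite s1 // s2 // chom /th /chi; ring.
have th0 : forall t, N2 t -> T_Om Om G t -> th t = 0.
  move=> t Nt Tt; rewrite /th z1 // z2 // (chi_kill (hII i0) lchi chom) ?addr0 ?subrr //.
  exact: hN2T.
exists g; split => //; split => // x n Nn.
have : setmul N2 (T_Om Om G) n by exists n => //; exists (pg_one G); [exact: T_one | by rewrite pg_mulr1].
rewrite -eT => -[a N1a [t Tt en]]; subst n.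
have N2t : N2 t.
  case: hN2 => _ _ hsub hconj.
  have := hconj (pg_mul (pg_mul a t) (pg_inv a)) a (hsub _ _ Nn (h12 _ N1a)).
  by rewrite pg_mulrKV pg_mulK.
by rewrite pg_mulA gs // th0 // subr0 gN.
Qed.

End PartE.

Section PartF.
Set Implicit Arguments. Unset Strict Implicit. Unset Printing Implicit Defensive.
Import GRing.Theory.
Local Open Scope classical_set_scope.
Local Open Scope ring_scope.

Lemma H2_mono p (I : Type) (Om : I -> cext p) (G : profGroup) (N1 N2 : set G)
  (h12 : N1 `<=` N2) f : in_H2pi Om N2 f -> in_H2pi Om N1 f.
Proof.
move=> [[[fc fN] fco] [n [w [rb [c [k [hl [hc [g [[gc gN] hg]]]]]]]]]].
split; first by split => //; split => // x y a b Na Nb; apply: fN; apply: h12.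
exists n, w, rb, c, k; split.
  by move=> i; case: (hl i) => h1 h2 h3; split => // m Nm; apply: h2; apply: h12.
split => //; exists g; split => //; split => // x a Na; apply: gN; exact: h12.
Qed.

Lemma lc2_delta p (G : profGroup) (g : G -> 'Z_p) : lc g ->
  lc (fun xy : G * G => g xy.2 - g (pg_mul xy.1 xy.2) + g xy.1).
Proof.
move=> lg; apply: lcD; first apply: lcB.
- by apply: (@lc_comp _ _ _ (fun xy : G * G => xy.2) g) => // xy; apply: cvg_snd.
- by apply: (@lc_comp _ _ _ (fun xy : G * G => pg_mul xy.1 xy.2) g) => //; exact: pg_mul_cont.
- by apply: (@lc_comp _ _ _ (fun xy : G * G => xy.1) g) => // xy; apply: cvg_fst.
Qed.

Lemma H2_surj p (I : Type) (Om : I -> cext p) (G : profGroup) (N1 N2 : set G)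
  (hN2T : N2 `<=` Tbar_Om Om G) f : in_H2pi Om N1 f ->
  exists2 f', in_H2pi Om N2 f' & cohom N1 f f'.
Proof.
move=> [[[fc fN] fco] [n [w [rb [c [k [hl [hc hcoh]]]]]]]].
pose f' x y := \sum_(i < n) c i (rb i x) (rb i y) *~ k i.
exists f'; last exact: hcoh.
case: hcoh => g [[gc gN] hg].
have ef : forall x y, f' x y = f x y - (g y - g (pg_mul x y) + g x).
  by move=> x y; rewrite /f' -hg; ring.
have rbk : forall i m, N2 m -> rb i m = pg_one _.
  by move=> i m Nm; case: (hl i) => h1 _ _; exact: (hN2T _ Nm (w i) _ h1).
split.
  split; first split.
  - move=> z; apply: (@lc_ext _ _ (fun xy : G * G => f xy.1 xy.2 - (g xy.2 - g (pg_mul xy.1 xy.2) + g xy.1))).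
      by move=> xy; rewrite ef.
    by apply: lcB => //; apply: lc2_delta.
  - move=> x y a b Na Nb; rewrite /f'; apply: eq_bigr => i _.
    by case: (hl i) => [[_ hm] _ _]; rewrite !hm (rbk i a) // (rbk i b) // !pg_mulr1.
  - move=> x y z; rewrite !ef.
    have := fco x y z; move=> e; rewrite -[RHS]e pg_mulA; ring.
exists n, w, rb, c, k; split.
  by move=> i; case: (hl i) => h1 h2 h3; split => // m Nm; apply: rbk.
split => //; exists (fun _ => 0); split.
  by split => //; exact: lc_cst.
by move=> x y; rewrite subrr; ring.
Qed.

End PartF.

Section PartG1.
Set Implicit Arguments. Unset Strict Implicit. Unset Printing Implicit Defensive.
Local Open Scope classical_set_scope.

Lemma fip (T : topologicalType) (D : set (set T)) : compact [set: T] ->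
  (forall C, D C -> closed C) -> finI D id -> exists x, forall C, D C -> C x.
Proof.
move=> cT clD fD.
have PF := finI_filter fD.
have [x [_ clx]] := cT _ PF (filterT).
exists x => C DC.
have FC : filter_from (finI_from D id) id C by exists C => //; apply: finI_from1.
have : closure C x.
  move=> B nB; exact: clx FC nB.
by rewrite -(proj1 (closure_id C) (clD _ DC)).
Qed.

Lemma fipI (T : topologicalType) (J : choiceType) (D : set J) (f : J -> set T) :
  compact [set: T] ->
  (forall j, D j -> closed (f j)) -> finI D f -> exists x, forall j, D j -> f j x.
Proof.
move=> cT clD fD.
have PF := finI_filter fD.
have [x [_ clx]] := cT _ PF (filterT).
exists x => j Dj.
have FC : filter_from (finI_from D f) id (f j) by exists (f j) => //; apply: finI_from1.
have : closure (f j) x.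
  move=> B nB; exact: clx FC nB.
by rewrite -(proj1 (closure_id (f j)) (clD _ Dj)).
Qed.

End PartG1.

Section PartG2.
Set Implicit Arguments. Unset Strict Implicit. Unset Printing Implicit Defensive.
Local Open Scope classical_set_scope.

Lemma clopen_seqI (T : topologicalType) (l : seq (set T)) :
  (forall K, K \in l -> clopen K) -> clopen [set z | forall K, K \in l -> K z].
Proof.
elim: l => [_|K l IH hl].
  have -> : [set z : T | forall K : set T, K \in ([::] : seq (set T)) -> K z] = setT.
    by apply/seteqP; split => // z _ K.
  exact: clopenT.
have -> : [set z | forall K', K' \in K :: l -> K' z] = K `&` [set z | forall K, K \in l -> K z].
  apply/seteqP; split => z /=.
    by move=> h; split; [apply: h; rewrite inE eqxx | move=> K' hK'; apply: h; rewrite inE hK' orbT].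
  by move=> [Kz h] K'; rewrite inE => /orP [/eqP -> //|]; apply: h.
apply: clopenI; first by apply: hl; rewrite inE eqxx.
by apply: IH => K' hK'; apply: hl; rewrite inE hK' orbT.
Qed.

Lemma clopen_split (T : topologicalType) (P O O' : set T) :
  clopen P -> open O -> open O' -> O `&` O' = set0 -> P `<=` O `|` O' ->
  clopen (P `&` O).
Proof.
move=> [oP cP] oO oO' d sP; split; first exact: openI.
have -> : P `&` O = P `&` ~` O'.
  apply/seteqP; split => z [Pz h]; split => //.
    by move=> O'z; have : (O `&` O') z by []; rewrite d.
  by case: (sP _ Pz).
by apply: closedI => //; exact: open_closedC.
Qed.

Lemma clopen_sep (T : topologicalType) : compact [set: T] -> hausdorff_space T ->
  totally_disconnected [set: T] ->
  forall x y : T, x <> y -> exists C, [/\ clopen C, C x & ~ C y].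
Proof.
move=> cT hT tT x y nxy.
apply: contrapT => hn.
pose Q := [set z | forall C, clopen C -> C x -> C z].
have Qy : Q y.
  move=> C cC Cx; apply: contrapT => nCy; apply: hn; by exists C.
have cQ : connected Q.
  apply: contrapT => /connectedPn [E [E0 EU [sep1 sep2]]].
  have clQ : closed Q.
    move=> z clz C cC Cx; apply: contrapT => nCz.
    have : nbhs z (~` C) by apply: open_nbhs_nbhs; split => //; apply: closed_openC; case: cC.
    move=> /clz [q [Qq nCq]]; exact: nCq (Qq C cC Cx).
  have clE : forall b, closed (E b).
    move=> b; rewrite (closure_id (E b)); apply/seteqP; split; first exact: subset_closure.
    move=> z clz.
    have : Q z.
      rewrite (proj1 (closure_id Q) clQ); apply: (@closureS _ (E b)) => //.
      by rewrite EU; case: b {clz} => ?; [right|left].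
    rewrite EU => -[] Ez //.
    + case: b clz => clz //; exfalso.
      have : closure (E true) `&` E false !=set0 by exists z.
      by rewrite setIC sep2 => -[].
    + case: b clz => clz //; exfalso.
      have : closure (E false) `&` E true !=set0 by exists z.
      by rewrite sep1 => -[].
  have dE : E false `&` E true = set0.
    apply/seteqP; split => // z [a b]; have : (closure (E false) `&` E true) z.
      by split => //; apply: subset_closure.
    by rewrite sep1.
  have nT := compact_normal hT cT.
  have : set_nbhs (E false) (~` E true).
    apply/set_nbhsP; exists (~` E true); split => //.
      exact: closed_openC.
    by move=> z Ez Et; have : (E false `&` E true) z by []; rewrite dE.
  move=> /(nT _ (clE false)) [V /set_nbhsP [W [oW EW WV]] cV].
  pose O0 := W; pose O1 := ~` closure V.
  have oO1 : open O1 by apply: closed_openC; exact: closed_closure.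
  have dO : O0 `&` O1 = set0.
    apply/seteqP; split => // z [Wz nz]; apply: nz; apply: subset_closure; exact: WV.
  have E1O1 : E true `<=` O1 by move=> z Ez cz; exact: (cV _ cz Ez).
  have QO : Q `<=` O0 `|` O1 by rewrite EU => z [] Ez; [left; exact: EW | right; exact: E1O1].
  pose Dc := [set K : set T | clopen K /\ K x].
  pose f K := K `&` ~` (O0 `|` O1).
  have nfin : ~ finI Dc f.
    move=> fD.
    have [|z hz] := fipI cT _ fD.
      move=> K [[_ cK] _]; apply: closedI => //; apply: open_closedC; exact: openU.
    have Qz : Q z by move=> C cC Cx; have [] := hz C (conj cC Cx).
    have [_ nz] := hz setT (conj clopenT I).
    exact: nz (QO _ Qz).
  have [D' sD' e] : exists2 D' : {fset (set T)}, {subset D' <= Dc} &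
      ~ (\bigcap_(i in [set i | i \in D']) f i !=set0).
    apply: contrapT => nh; apply: nfin => D' sD'; apply: contrapT => ne; apply: nh; by exists D'.
  pose P := [set z | forall K, K \in D' -> K z].
  have cP : clopen P.
    apply: (@clopen_seqI T D') => K /sD'; rewrite in_setE; by case.
  have Px : P x by move=> K /sD'; rewrite in_setE => -[].
  have PO : P `<=` O0 `|` O1.
    move=> z Pz; apply: contrapT => nz; apply: e; exists z => K /= hK; split; first exact: Pz.
    exact: nz.
  have Qx : Q x by [].
  move: Qx; rewrite EU => -[] Ex.
  - have cR := clopen_split cP oW oO1 dO PO.
    have Rx : (P `&` O0) x by split => //; exact: EW.
    have [e1 Ee1] := E0 true.
    have Qe1 : Q e1 by rewrite EU; right.
    have [_ O0e1] := Qe1 _ cR Rx.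
    have : (O0 `&` O1) e1 by split => //; exact: E1O1.
    by rewrite dO.
  - have dO' : O1 `&` O0 = set0 by rewrite setIC.
    have PO' : P `<=` O1 `|` O0 by move=> z /PO; rewrite setUC.
    have cR := clopen_split cP oO1 oW dO' PO'.
    have Rx : (P `&` O1) x by split => //; exact: E1O1.
    have [e0 Ee0] := E0 false.
    have Qe0 : Q e0 by rewrite EU; left.
    have [_ O1e0] := Qe0 _ cR Rx.
    have : (O0 `&` O1) e0 by split => //; exact: EW.
    by rewrite dO.
have := tT x I; rewrite /connected_component => ecc.
have : [set x] y.
  rewrite -ecc; exists Q => //; split => //.
by move=> /= eyx; apply: nxy.
Qed.

End PartG2.

Section PartG3.
Set Implicit Arguments. Unset Strict Implicit. Unset Printing Implicit Defensive.
Import GRing.Theory.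
Local Open Scope classical_set_scope.

Lemma clopen_finI (T : topologicalType) (F : finType) (P : F -> set T) :
  (forall i, clopen (P i)) -> clopen [set x | forall i, P i x].
Proof.
move=> hP.
have -> : [set x | forall i, P i x] = [set x | forall K, K \in [seq P i | i <- enum F] -> K x].
  apply/seteqP; split => x /= h.
    by move=> K /mapP [i _ ->].
  by move=> i; apply: h; apply: map_f; rewrite mem_enum.
by apply: clopen_seqI => K /mapP [i _ ->].
Qed.

Lemma lmul_cont (G : profGroup) (a : G) : continuous (fun v : G => pg_mul a v).
Proof. apply: (@pg_mul_cont2 G G (fun _ => a) id); [move=> x; exact: cvg_cst | move=> x; exact: cvg_id]. Qed.

Section Sect.
Variable p : nat.
Variable w : cext p.
Local Notation "x \* y" := (pg_mul x y) (at level 40, left associativity).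
Local Notation U := (ce_U w).
Local Notation Ub := (ce_Ub w).
Local Notation io := (@ce_iota _ w).
Local Notation lam := (@ce_lam _ w).

Definition Sat (A : set U) := [set v | exists z, A (io z \* v)].

Lemma Sat_clopen A : clopen A -> clopen (Sat A).
Proof.
move=> cA.
have -> : Sat A = ~` [set v | forall z, (fun z v => ~ A (io z \* v)) z v].
  apply/seteqP; split => v /=; first by move=> [z Az] h; exact: h z Az.
  by move=> h; apply: contrapT => nh; apply: h => z Az; apply: nh; exists z.
apply: (@clopenC _ _ set0); apply: (@clopen_finI _ _ (fun (z : 'Z_p) v => ~ A (io z \* v))) => z.
apply: (preimage_clopen (f := fun v => io z \* v) (A := ~` A)); last exact: lmul_cont.
exact: (@clopenC _ _ set0).
Qed.

Lemma Sat_shift A z v : Sat A (io z \* v) -> Sat A v.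
Proof. by move=> [z' h]; exists (z' + z)%R; rewrite ce_iota_hom -pg_mulA. Qed.

Lemma Sat_self A v : A v -> Sat A v.
Proof. by move=> Av; exists 0%R; rewrite io0 pg_mul1. Qed.

Definition slice (E : set U) := forall v z, z != 0%R -> E v -> ~ E (io z \* v).

Lemma io_ne z (u : U) : z != 0%R -> io z \* u <> u.
Proof.
move=> nz e; move: nz; rewrite -(@io_inj _ w z 0%R) ?eqxx //.
rewrite io0; apply: (@pg_mulIr _ u); by rewrite e pg_mul1.
Qed.

Lemma slice_nbhd (u : U) : exists E, [/\ clopen E, E u & slice E].
Proof.
have hC : forall z : 'Z_p, exists C : set U, [/\ clopen C, C u & (z != 0%R -> ~ C (io z \* u))].
  move=> z; have [z0|nz] := eqVneq z 0%R.
    by exists setT; split => //; exact: clopenT.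
  have [C [cC Cu nC]] := clopen_sep (@pg_compact U) (@pg_hausdorff U) (@pg_totdisc U) (fun e => io_ne (u:=u) nz (esym e)).
  by exists C; split.
have [Cf hCf] := choice hC.
pose D := [set v | forall z, Cf z v].
have cD : clopen D by apply: clopen_finI => z; case: (hCf z).
exists (D `&` [set v | forall z, (fun z v => z != 0%R -> ~ D (io z \* v)) z v]); split.
- apply: clopenI => //; apply: clopen_finI => z.
  have [->|nz] := eqVneq z 0%R.
    apply: (eq_ind setT clopen clopenT); apply/seteqP; split => v //= _; rewrite eqxx.
  apply: (eq_ind ((fun v => io z \* v) @^-1` (~` D)) clopen).
    by apply: preimage_clopen; [exact: (@clopenC _ _ set0) | exact: lmul_cont].
  by apply/seteqP; split => v /=; [move=> h _ | apply].
- split; first by move=> z; case: (hCf z).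
  move=> z /= nz Dz; case: (hCf z) => _ _ /(_ nz); apply; exact: Dz.
- by move=> v z nz [_ h] [Dz _]; exact: (h z nz Dz).
Qed.

Fixpoint Cl (E : U -> set U) (l : seq U) : set U :=
  if l is u :: l' then E u `|` (Cl E l' `&` ~` Sat (E u)) else set0.

Lemma Cl_props (E : U -> set U) (hE : forall u, clopen (E u) /\ slice (E u)) l :
  [/\ clopen (Cl E l), slice (Cl E l) &
      forall v, (exists2 u, u \in l & Sat (E u) v) -> Sat (Cl E l) v].
Proof.
elim: l => [|u l [cC sC vC]] /=.
  split; [exact: clopen0 | by move=> v z _ [] | by move=> v [u]].
have [cE sE] := hE u.
split.
- apply: clopenU => //; apply: clopenI => //; apply: (@clopenC _ _ set0); exact: (Sat_clopen cE).
- move=> v z nz [Ev|[Cv nS]].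
    move=> [Ez|[_ nS]]; first exact: (sE v z nz Ev Ez).
    apply: nS; exists (- z)%R; rewrite pg_mulA -ce_iota_hom addNr io0 pg_mul1 //.
  move=> [Ez|[Cz _]]; first by apply: nS; exists z.
  exact: (sC v z nz Cv Cz).
- move=> v [x]; rewrite inE => /orP [/eqP ->|xl] Sv.
    by case: Sv => z Ez; exists z; left.
  have [Su|nSu] := pselect (Sat (E u) v).
    by case: Su => z Ez; exists z; left.
  have [z Cz] := vC v (ex_intro2 _ _ x xl Sv).
  exists z; right; split => // h; apply: nSu; exact: Sat_shift h.
Qed.

Lemma cext_section : exists s : Ub -> U, continuous s /\ forall a, lam (s a) = a.
Proof.
have [E hE] := choice slice_nbhd.
have hE' : forall u, clopen (E u) /\ slice (E u) by move=> u; case: (hE u).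
have nfin : ~ finI [set: U] (fun u => ~` Sat (E u)).
  move=> fD; have [|x hx] := fipI (@pg_compact U) _ fD.
    move=> u _; apply: open_closedC; by case: (Sat_clopen (hE' u).1).
  apply: (hx x I); apply: Sat_self; by case: (hE x).
have [D' _ e] : exists2 D' : {fset U}, {subset D' <= [set: U]} &
    ~ (\bigcap_(i in [set i | i \in D']) (~` Sat (E i)) !=set0).
  apply: contrapT => nh; apply: nfin => D' sD'; apply: contrapT => ne; apply: nh; by exists D'.
pose C := Cl E D'.
have [cC sC vC] := Cl_props hE' D'.
have covC : forall v, Sat C v.
  move=> v; apply: vC; apply: contrapT => nh; apply: e; exists v => u /= uD Su.
  by apply: nh; exists u.
have ex : forall a, exists x, C x /\ lam x = a.
  move=> a; have [v lv] := ce_lam_surj a.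
  have [z Cz] := covC v; exists (io z \* v); split => //.
  by rewrite (ce_lam_hom w).2 lam_io pg_mul1.
have uniq : forall x x', C x -> C x' -> lam x = lam x' -> x = x'.
  move=> x x' Cx Cx' e'.
  have : lam (x' \* pg_inv x) = pg_one Ub.
    by rewrite (ce_lam_hom w).2 (conthomV _ (ce_lam_hom w)) -e' pg_mulVr.
  move=> /(@ce_exact _ w) [z ez].
  have ex' : x' = io z \* x by rewrite ez pg_mulrKV.
  have [z0|nz] := eqVneq z 0%R; first by rewrite ex' z0 io0 pg_mul1.
  by exfalso; apply: (sC x z nz Cx); rewrite -ex'.
pose s a := proj1_sig (cid (ex a)).
have hs : forall a, C (s a) /\ lam (s a) = a by move=> a; exact: proj2_sig (cid (ex a)).
exists s; split; last by move=> a; case: (hs a).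
apply/continuousP => O oO.
have -> : s @^-1` O = ~` (lam @` (C `&` ~` O)).
  apply/seteqP; split => a /=.
    move=> Oa [x [Cx nOx] lx]; apply: nOx.
    have <- : s a = x by apply: uniq; [case: (hs a)|exact: Cx|rewrite lx; case: (hs a)].
    exact: Oa.
  move=> h; apply: contrapT => nO; apply: h; exists (s a); last by case: (hs a).
  by split => //; case: (hs a).
apply: closed_openC; apply: compact_closed; first exact: pg_hausdorff.
apply: continuous_compact; first exact/continuous_subspaceT/(ce_lam_hom w).1.
apply: (subclosed_compact _ (@pg_compact U)) => //.
by apply: closedI; [case: cC | exact: open_closedC].
Qed.
End Sect.

End PartG3.

Section PartG4.
Set Implicit Arguments. Unset Strict Implicit. Unset Printing Implicit Defensive.
Import GRing.Theory.
Local Open Scope ring_scope.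

Lemma LA_F (q : nat) m (W : ('I_m -> 'F_q) -> Prop) (v : 'I_m -> 'F_q) :
  W (fun _ => 0) -> (forall a b, W a -> W b -> W (fun j => a j + b j)) -> ~ W v ->
  exists k : 'I_m -> int, (forall a, W a -> \sum_j a j *~ k j = 0) /\ \sum_j v j *~ k j <> 0.
Proof.
move=> W0 WD nWv.
pose Wr := [set r : 'rV['F_q]_m | `[< W (fun j => r 0 j) >]].
have WrP : forall r, (r \in Wr) <-> W (fun j => r 0 j).
  by move=> r; rewrite inE; split => [/asboolP|/asboolP].
pose A := \matrix_(i < #|Wr|) (@enum_val _ (mem Wr) i).
have sub1 : forall r, r \in Wr -> (r <= A)%MS.
  move=> r rW; have -> : r = row (enum_rank_in rW r) A.
    by rewrite rowK enum_rankK_in.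
  exact: row_sub.
have Wr0 : 0 \in Wr by apply/WrP; have -> : (fun j => (0 : 'rV['F_q]_m) 0 j) = (fun _ => 0) by apply: funext => j; rewrite mxE.
have WrD : forall r1 r2, r1 \in Wr -> r2 \in Wr -> r1 + r2 \in Wr.
  move=> r1 r2 /WrP h1 /WrP h2; apply/WrP.
  have -> : (fun j => (r1 + r2) 0 j) = (fun j => r1 0 j + r2 0 j) by apply: funext => j; rewrite mxE.
  exact: WD.
have WrN : forall r n, r \in Wr -> r *+ n \in Wr.
  by move=> r n rW; elim: n => [|n IH]; rewrite ?mulr0n // mulrS; apply: WrD.
have WrZ : forall (c : 'F_q) r, r \in Wr -> c *: r \in Wr.
  by move=> c r rW; rewrite -[c]natr_Zp scaler_nat; apply: WrN.
pose vr := \row_j v j.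
have nsub : ~~ (vr <= A)%MS.
  apply/negP => /submxP [D eD].
  have : vr \in Wr.
    rewrite eD mulmx_sum_row; apply: (big_ind (fun r => r \in Wr)); [exact: Wr0 | by move=> x y hx hy; apply: WrD | ].
    move=> i _; apply: WrZ; rewrite rowK; exact: enum_valP.
  move=> /WrP; have -> : (fun j => vr 0 j) = v by apply: funext => j; rewrite mxE.
  exact: nWv.
have [j hj] : exists j, (vr *m cokermx A) 0 j != 0.
  apply: contrapT => nh; move: nsub; rewrite submxE => /eqP; apply.
  apply/matrixP => i j; rewrite ord1 [RHS]mxE; apply: contrapT => hne.
  by apply: nh; exists j; apply/eqP.
exists (fun l => (nat_of_ord (cokermx A l j))%:Z).
have conv : forall (a : 'I_m -> 'F_q), \sum_l a l *~ (nat_of_ord (cokermx A l j))%:Z = ((\row_l a l) *m cokermx A) 0 j.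
  move=> a; rewrite [RHS]mxE; apply: eq_bigr => l _; rewrite [X in X * _]mxE.
  by rewrite -pmulrn -mulr_natr natr_Zp.
split.
  move=> a Wa; rewrite conv.
  have : (\row_l a l <= A)%MS.
    apply: sub1; apply/WrP; have -> : (fun j => (\row_l a l) 0 j) = a by apply: funext => l; rewrite mxE.
    exact: Wa.
  by rewrite submxE => /eqP ->; rewrite mxE.
by rewrite conv; apply/eqP.
Qed.

Lemma LA (q : nat) (hq : prime q) m (W : ('I_m -> 'Z_q) -> Prop) (v : 'I_m -> 'Z_q) :
  W (fun _ => 0) -> (forall a b, W a -> W b -> W (fun j => a j + b j)) -> ~ W v ->
  exists k : 'I_m -> int, (forall a, W a -> \sum_j a j *~ k j = 0) /\ \sum_j v j *~ k j <> 0.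
Proof.
have := @LA_F q m; rewrite (pdiv_id hq); apply.
Qed.

End PartG4.

Section PartG5.
Set Implicit Arguments. Unset Strict Implicit. Unset Printing Implicit Defensive.
Import GRing.Theory.
Local Open Scope classical_set_scope.
Local Open Scope ring_scope.

Lemma cn_mul (G : profGroup) (N : set G) : closed_normal N ->
  forall a b, N a -> N b -> N (pg_mul a b).
Proof.
case=> _ N1 hsub _ a b Na Nb.
have Nib : N (pg_inv b) by rewrite -[pg_inv b]pg_mul1; apply: hsub.
by rewrite -[b]pg_invK; apply: hsub.
Qed.

Lemma T_mul p (I : Type) (Om : I -> cext p) (G : profGroup) (a b : G) :
  T_Om Om G a -> T_Om Om G b -> T_Om Om G (pg_mul a b).
Proof. by move=> Ta Tb i f hf; rewrite hf.2 (Ta i f hf) (Tb i f hf) pg_mul1. Qed.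

Lemma lc2_of p (G : profGroup) (Hc : G -> 'Z_p) : lc Hc ->
  lc (fun xy : G * G => Hc (pg_mul xy.1 xy.2) - Hc xy.1 - Hc xy.2).
Proof.
move=> lg; apply: lcB; first apply: lcB.
- by apply: (@lc_comp _ _ _ (fun xy : G * G => pg_mul xy.1 xy.2) Hc) => //; exact: pg_mul_cont.
- by apply: (@lc_comp _ _ _ (fun xy : G * G => xy.1) Hc) => // xy; apply: cvg_fst.
- by apply: (@lc_comp _ _ _ (fun xy : G * G => xy.2) Hc) => // xy; apply: cvg_snd.
Qed.

Lemma b_to_c p (hp : prime p) (I : Type) (i0 : I) (Om : I -> cext p)
    (hII : forall i, condII (Om i))
    (G : profGroup) (N1 N2 : set G)
    (hN1 : closed_normal N1) (hN2 : closed_normal N2) (h12 : N1 `<=` N2)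
    (hN2T : N2 `<=` Tbar_Om Om G) :
  (forall f1 f2, in_H2pi Om N2 f1 -> in_H2pi Om N2 f2 ->
               cohom N1 f1 f2 -> cohom N2 f1 f2) ->
  forall n, N2 n -> setmul N1 (T_Om Om G) n.
Proof.
move=> inj n Nn; apply: contrapT => nS.
pose Dp := [set K : set G | exists i (f : G -> ce_U (Om i)), conthom f /\
   K = N1 `&` [set a | f a = f n]].
have nfin : ~ finI Dp id.
  move=> fD; have [|x hx] := fipI (@pg_compact G) _ fD.
    move=> K [i [f [hf ->]]]; apply: closedI; first by case: hN1.
    have -> : [set a | f a = f n] = f @^-1` [set f n] by [].
    apply: closed_comp; first by move=> y _; exact: hf.1.
    apply: accessible_closed_set1; apply: hausdorff_accessible; exact: pg_hausdorff.
  have [N1x _] := hx _ (ex_intro _ i0 (ex_intro _ _ (conj (conthom_one G (ce_U (Om i0))) erefl))).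
  apply: nS; exists x => //; exists (pg_mul (pg_inv x) n); last by rewrite pg_mulKV.
  move=> i f hf; have [_ e] := hx _ (ex_intro _ i (ex_intro _ _ (conj hf erefl))).
  by rewrite hf.2 (conthomV _ hf) e pg_mulV.
have [D' sD' e] : exists2 D' : {fset (set G)}, {subset D' <= Dp} &
    ~ (\bigcap_(i in [set i | i \in D']) id i !=set0).
  apply: contrapT => nh; apply: nfin => D' sD'; apply: contrapT => ne; apply: nh; by exists D'.
pose m := size D'.
have hK : forall j : 'I_m, exists pr : {i : I & G -> ce_U (Om i)}, conthom (projT2 pr) /\
    nth set0 D' j = N1 `&` [set a | projT2 pr a = projT2 pr n].
  move=> j; have : nth set0 D' j \in D' by apply: mem_nth.
  move=> /sD'; rewrite in_setE => -[i [f [hf ef]]].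
  by exists (existT _ i f).
pose pr j := proj1_sig (cid (hK j)).
pose wj j := projT1 (pr j).
pose fj j : G -> ce_U (Om (wj j)) := projT2 (pr j).
have hf : forall j, conthom (fj j) /\ nth set0 D' j = N1 `&` [set a | fj j a = fj j n].
  move=> j; exact: (proj2_sig (cid (hK j))).
have noa : ~ exists a, N1 a /\ forall j, fj j a = fj j n.
  move=> [a [N1a ha]]; apply: e; exists a => K /= KD.
  have jlt : (index K D' < m)%N by rewrite index_mem.
  have := (hf (Ordinal jlt)).2; rewrite /= nth_index // => ->.
  by split => //; exact: (ha (Ordinal jlt)).
have lamN2 : forall j x, N2 x -> ce_lam (fj j x) = pg_one _.
  move=> j x Nx; exact: (hN2T _ Nx (wj j) _ (conthom_comp (hf j).1 (@ce_lam_hom _ (Om (wj j))))).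
have kapM : forall j x y, N2 x -> N2 y -> kap (fj j (pg_mul x y)) = kap (fj j x) + kap (fj j y).
  move=> j x y Nx Ny; apply: (@io_inj _ (Om (wj j))).
  by rewrite ce_iota_hom !kapK ?(hf j).1.2 // ?(hf j).1.2 ?(ce_lam_hom _).2 ?lamN2 ?pg_mul1 //; apply: cn_mul.
pose vec x : 'I_m -> 'Z_p := fun j => kap (fj j x).
have [k [k1 k2]] : exists k : 'I_m -> int, (forall a, (fun v => exists a, N1 a /\ vec a = v) a -> \sum_j a j *~ k j = 0) /\ \sum_j vec n j *~ k j <> 0.
  apply: LA => //.
  - exists (pg_one G); split; first by case: hN1.
    apply: funext => j; rewrite /vec (conthom1 (hf j).1) -(@io0 _ (Om (wj j))) kapE //.
  - move=> _ _ [a [N1a <-]] [b [N1b <-]]; exists (pg_mul a b); split; first exact: cn_mul.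
    by apply: funext => j; rewrite /vec kapM //; apply: h12.
  - move=> [a [N1a ea]]; apply: noa; exists a; split => // j.
    rewrite -(kapK (lamN2 j a (h12 _ N1a))) -(kapK (lamN2 j n Nn)).
    by have := congr1 (fun v => v j) ea; rewrite /vec => ->.
have hsj : forall j, {s : ce_Ub (Om (wj j)) -> ce_U (Om (wj j)) | continuous s /\ forall a, ce_lam (s a) = a}.
  move=> j; apply: cid; exact: cext_section.
pose s j := proj1_sig (hsj j).
have hs : forall j, continuous (s j) /\ forall a, ce_lam (s j a) = a by move=> j; exact: proj2_sig (hsj j).
pose c j (a b : ce_Ub (Om (wj j))) := kap (pg_mul (pg_mul (s j a) (s j b)) (pg_inv (s j (pg_mul a b)))).
have hc : forall j a b, ce_iota _ (c j a b) = pg_mul (pg_mul (s j a) (s j b)) (pg_inv (s j (pg_mul a b))).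
  move=> j a b; apply: kapK.
  have lh := @ce_lam_hom _ (Om (wj j)).
  by rewrite !lh.2 (conthomV _ lh) !(hs j).2 pg_mulVr.
pose rb j x := ce_lam (fj j x).
pose hj j := hh (s j) (fj j).
pose Hc x := \sum_(j < m) hj j x *~ k j.
have eF : forall x y, \sum_(j < m) c j (rb j x) (rb j y) *~ k j = Hc (pg_mul x y) - Hc x - Hc y.
  move=> x y; rewrite /Hc -!sumrB; apply: eq_bigr => j _.
  rewrite -!mulrzBl; congr (_ *~ _).
  exact: (c_hh (hs j).2 (hf j).1 (hc j)).
have shift : forall x a, N2 a -> Hc (pg_mul x a) = Hc x + \sum_(j < m) vec a j *~ k j.
  move=> x a Na; rewrite /Hc -big_split; apply: eq_bigr => j _ /=.
  rewrite -mulrzDl; congr (_ *~ _).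
  by apply: hh_shift; [exact: (hs j).2 | exact: (hf j).1 | exact: (lamN2 j a Na)].
have lHc : lc Hc.
  apply: lc_sum => j; apply: lcMz; exact: (hh_lc (hs j).1 (hs j).2 (hf j).1).
pose f1 x y := \sum_(j < m) c j (rb j x) (rb j y) *~ k j.
have in1 : in_H2pi Om N2 f1.
  split.
    split; first split.
    - move=> z; apply: (@lc_ext _ _ (fun xy : G * G => Hc (pg_mul xy.1 xy.2) - Hc xy.1 - Hc xy.2)).
        by move=> xy; rewrite /f1 eF.
      exact: lc2_of.
    - move=> x y a b Na Nb; rewrite /f1; apply: eq_bigr => j _.
      by rewrite /rb !(hf j).1.2 !(@ce_lam_hom _ (Om (wj j))).2 (lamN2 j a) // (lamN2 j b) // !pg_mulr1.
    - move=> x y z; rewrite /f1 !eF pg_mulA; ring.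
  exists m, wj, rb, c, k; split.
    move=> j; split.
    - exact: (conthom_comp (hf j).1 (@ce_lam_hom _ (Om (wj j)))).
    - by move=> a Na; exact: lamN2.
    - by exists (fj j); split => //; exact: (hf j).1.
  split; first by move=> j; exists (s j); split => //; [exact: (hs j).1 | exact: (hs j).2].
  exists (fun _ => 0); split; first by split => //; exact: lc_cst.
  by move=> x y; rewrite subrr; ring.
have in0 : in_H2pi Om N2 (fun _ _ => 0).
  split.
    split; first by split => //; exact: (@lc_cst p (G * G)%type 0).
    by move=> *; ring.
  exists 0%N, (fun _ => i0), (fun _ _ => pg_one _), (fun _ _ _ => 0), (fun _ => 0).
  split; first by case.
  split; first by case.
  exists (fun _ => 0); split; first by split => //; exact: lc_cst.
  by move=> x y; rewrite big_ord0; ring.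
have coh1 : cohom N1 f1 (fun _ _ => 0).
  exists (fun x => - Hc x); split.
    split; first exact: lcN.
    move=> x a Na; rewrite shift; last exact: h12.
    by rewrite (k1 (vec a)) ?addr0 //; exists a.
  by move=> x y; rewrite /f1 eF; ring.
have [g' [[g'c g'N] hg']] := inj _ _ in1 in0 coh1.
pose chi x := g' x + Hc x.
have chom : forall x y, chi (pg_mul x y) = chi x + chi y.
  apply: delta0_hom => x y; have := hg' x y; rewrite /f1 eF subr0 /chi => E.
  have -> : g' y + Hc y - (g' (pg_mul x y) + Hc (pg_mul x y)) + (g' x + Hc x) =
    (g' y - g' (pg_mul x y) + g' x) - (Hc (pg_mul x y) - Hc x - Hc y) by ring.
  by rewrite -E subrr.
have lchi : lc chi by apply: lcD.
have chin : chi n = 0.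
  apply: (chi_kill (hII i0) lchi chom); exact: (hN2T _ Nn i0).
have chi1 : chi (pg_one G) = 0.
  have := chom (pg_one G) (pg_one G); rewrite pg_mul1 => e11.
  by apply: (@addrI _ (chi (pg_one G))); rewrite addr0 -e11.
have e0 : chi (pg_mul (pg_one G) n) = 0 by rewrite pg_mul1.
move: e0; rewrite /chi g'N // shift // => e0.
apply: k2; rewrite -[RHS]e0 addrA.
by move: chi1; rewrite /chi => ->; rewrite add0r.
Qed.

End PartG5.

Unset Implicit Arguments. Set Strict Implicit. Set Printing Implicit Defensive.
Local Open Scope classical_set_scope.

Theorem corollary7p3 (p : nat) (hp : prime p) (I : Type) (i0 : I)
    (Om : I -> cext p) (hI : forall i, condI (Om i)) (hII : forall i, condII (Om i))
    (G : profGroup) (N1 N2 : set G)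
    (hN1 : closed_normal N1) (hN2 : closed_normal N2) (h12 : N1 `<=` N2)
    (hN1T : N1 `<=` Tbar_Om Om G) (hN2T : N2 `<=` Tbar_Om Om G) :
  let inj := forall f1 f2, in_H2pi Om N2 f1 -> in_H2pi Om N2 f2 ->
               cohom N1 f1 f2 -> cohom N2 f1 f2 in
  let iso := [/\ (forall f, in_H2pi Om N2 f -> in_H2pi Om N1 f), inj &
                 (forall f, in_H2pi Om N1 f ->
                    exists2 f', in_H2pi Om N2 f' & cohom N1 f f')] in
  (iso <-> inj) /\ (inj <-> setmul N1 (T_Om Om G) = setmul N2 (T_Om Om G)).
Proof.
move=> inj iso.
have injTo : inj -> setmul N1 (T_Om Om G) = setmul N2 (T_Om Om G).
  move=> hinj; apply/seteqP; split => z.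
  - move=> [a N1a [t Tt ->]]; exists a; [exact: h12 | by exists t].
  - move=> [n Nn [t Tt ->]].
    have [a N1a [t' Tt' ->]] := b_to_c hp i0 hII hN1 hN2 h12 hN2T hinj Nn.
    exists a => //; exists (pg_mul t' t); [exact: T_mul | by rewrite pg_mulA].
split.
  split; first by case.
  move=> hinj; split => //.
  - move=> f; exact: (@H2_mono _ _ Om G N1 N2 h12 f).
  - move=> f; exact: (@H2_surj _ _ Om G N1 N2 hN2T f).
split => //; exact: (@c_to_b _ _ i0 Om hII G N1 N2 hN2 h12 hN2T).
Qed.
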